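(* For $s>0$ and $\kappa\ge1$, if $\theta_0\in[\phi(R)+\kappa\phi^{(s)},\frac\pi2)$, then $e^{\tilde{\mathfrak r}_0-\mathfrak r_0}=O\big(\varepsilon(\kappa,s)^{-1/\alpha}\big)$, with implicit constant depending only on $\alpha$.
   Context: Fixed constants $\nu>0$, $\alpha\in(\tfrac12,1]$; $R:=2\log(n/\nu)$, $n$ large. $\phi(r)\in[0,\pi/2]$ is defined for $r\in[0,R]$ by $\cos\phi(r)=\coth R\tanh(r/2)$ (decreasing bijection onto $[\phi(R),\pi/2]$). $\phi^{(s)}:=(s^{1/\alpha}/e^R)^{1/2}$, $\varepsilon(\kappa,s):=\frac{1+s}{(1+\kappa s^{1/(2\alpha)})^{2\alpha}}$. $\mathfrak r_0:=\phi^{-1}(\theta_0)$ and $\tilde{\mathfrak r}_0\in[\mathfrak r_0,R]$ is the unique value with $\frac{\log(\tanh(\alpha R/2)/\tanh(\alpha\tilde{\mathfrak r}_0/2))}{\log(\tanh(\alpha R/2)/\tanh(\alpha\mathfrak r_0/2))}=\varepsilon(\kappa,s)$. *)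

(* Defs.v *)
From Stdlib Require Import Reals.
Open Scope R_scope.

Definition tanhR (x : R) : R := (exp x - exp (- x)) / (exp x + exp (- x)).
Definition cothR (x : R) : R := (exp x + exp (- x)) / (exp x - exp (- x)).

Definition bigR (nu : R) (n : nat) : R := 2 * ln (INR n / nu).

Definition phi (Rr r : R) : R := acos (cothR Rr * tanhR (r / 2)).

Definition phis (alpha Rr s : R) : R := sqrt (Rpower s (1 / alpha) / exp Rr).

Definition epsk (alpha kappa s : R) : R :=
  (1 + s) / Rpower (1 + kappa * Rpower s (1 / (2 * alpha))) (2 * alpha).

Definition ratio (alpha Rr rt r0 : R) : R :=
  ln (tanhR (alpha * Rr / 2) / tanhR (alpha * rt / 2)) /
  ln (tanhR (alpha * Rr / 2) / tanhR (alpha * r0 / 2)).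

(* Main.v *)
From Coquelicot Require Import Coquelicot.
From Stdlib Require Import Reals Lra.
Open Scope R_scope.

Lemma mono_le (f df : R -> R) (x y : R) :
  x <= y -> (forall t, x <= t <= y -> is_derive f t (df t)) ->
  (forall t, x <= t <= y -> 0 <= df t) -> f x <= f y.
Proof.
intros Hxy Hd Hp.
destruct (MVT_gen f x y df) as [c [Hc Heq]].
- intros t Ht. rewrite Rmin_left in Ht by lra. rewrite Rmax_right in Ht by lra.
  apply Hd; lra.
- intros t Ht. rewrite Rmin_left in Ht by lra. rewrite Rmax_right in Ht by lra.
  apply continuity_pt_filterlim. apply (ex_derive_continuous (K:=R_AbsRing) (V:=R_NormedModule)).
  exists (df t). apply Hd; lra.
- rewrite Rmin_left in Hc by lra. rewrite Rmax_right in Hc by lra.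
  assert (0 <= df c) by (apply Hp; lra).
  assert (0 <= df c * (y - x)) by (apply Rmult_le_pos; lra). lra.
Qed.

Lemma Qineq (w : R) : 1 <= w -> ln w <= (w - / w) / 2.
Proof.
intros Hw.
pose (Q := fun w => (w - / w) / 2 - ln w).
assert (Q 1 <= Q w).
{ apply (mono_le Q (fun w => (w - 1)^2 / (2 * w^2))); auto.
  - intros t Ht. unfold Q. auto_derive.
    + lra.
    + field. lra.
  - intros t Ht. apply Rmult_le_pos. apply pow2_ge_0.
    apply Rlt_le, Rinv_0_lt_compat. nra. }
unfold Q in H. rewrite ln_1, Rinv_1 in H. lra.
Qed.

Lemma Hmono (K w1 w2 : R) : 0 <= K -> 1 < w1 <= w2 ->
  (ln w1 - K) * ((w1 + 1) / (w1 - 1)) <= (ln w2 - K) * ((w2 + 1) / (w2 - 1)).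
Proof.
intros HK Hw.
apply (mono_le (fun w => (ln w - K) * ((w + 1) / (w - 1)))
  (fun w => ((w+1)*(w-1)/w - 2 * (ln w - K)) / (w-1)^2)).
- lra.
- intros t Ht. auto_derive.
  + lra.
  + field. lra.
- intros t Ht. apply Rmult_le_pos.
  + assert (ln t <= (t - / t)/2) by (apply Qineq; lra).
    assert ((t+1)*(t-1)/t = t - / t) by (field; lra). lra.
  + apply Rlt_le, Rinv_0_lt_compat. nra.
Qed.

Require Import Defs.

Lemma exp_mono (x y : R) : x <= y -> exp x <= exp y.
Proof. intros H. destruct (Rle_lt_or_eq_dec x y H) as [h|h]. left; apply exp_increasing; auto. subst; lra. Qed.

Lemma tanh_form (x : R) : tanhR (x / 2) = (exp x - 1) / (exp x + 1).
Proof.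
unfold tanhR. rewrite exp_Ropp.
assert (He : exp x = exp (x/2) * exp (x/2)) by (rewrite <- exp_plus; f_equal; field).
rewrite He. assert (0 < exp (x/2)) by apply exp_pos.
field. split; nra.
Qed.

Lemma wE (E : R) : 1 < E -> ((E + 1) / (E - 1) + 1) / ((E + 1) / (E - 1) - 1) = E.
Proof. intros. field. lra. Qed.

Theorem mainTheorem9 :
  forall alpha : R, 1 / 2 < alpha <= 1 ->
  exists C : R, 0 < C /\
  forall nu : R, 0 < nu ->
  exists N : nat, forall n : nat, (N <= n)%nat ->
  let Rr := bigR nu n in
  forall (s kappa theta0 r0 rt : R),
    0 < s -> 1 <= kappa ->
    phi Rr Rr + kappa * phis alpha Rr s <= theta0 -> theta0 < PI / 2 ->
    (* r0 = phi^{-1}(theta0) *)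
    0 <= r0 <= Rr -> phi Rr r0 = theta0 ->
    (* rt = r~0 : the value in [r0, R] solving the ratio equation *)
    r0 <= rt <= Rr -> ratio alpha Rr rt r0 = epsk alpha kappa s ->
    exp (rt - r0) <= C * Rpower (epsk alpha kappa s) (- (1 / alpha)).
Proof.
intros a Ha. exists 1. split; [lra|]. intros nu Hnu. exists 0%nat. intros n _ Rr.
intros s kappa theta0 r0 rt Hs Hk _ Hth Hr0 Hphi Hrt Hrat.
assert (Hr0p : 0 < r0).
{ destruct (Rle_lt_or_eq_dec 0 r0 (proj1 Hr0)) as [h|h]; auto.
  subst r0. exfalso. unfold phi in Hphi.
  replace (0/2) with 0 in Hphi by field.
  unfold tanhR in Hphi. rewrite Ropp_0, Rminus_diag, Rdiv_0_l, Rmult_0_r, acos_0 in Hphi.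
  lra. }
assert (Heps : 0 < epsk a kappa s).
{ unfold epsk, Rpower. apply Rdiv_lt_0_compat; [lra| apply exp_pos]. }
set (eps := epsk a kappa s) in *.
set (E0 := exp (a * r0)). set (Et := exp (a * rt)). set (ER := exp (a * Rr)).
assert (H1 : 1 < E0). { unfold E0. rewrite <- exp_0. apply exp_increasing. nra. }
assert (H2 : E0 <= Et). { unfold E0, Et. apply exp_mono. nra. }
assert (H3 : Et <= ER). { unfold ER, Et. apply exp_mono. nra. }
set (w0 := (E0 + 1) / (E0 - 1)). set (wt := (Et + 1) / (Et - 1)).
set (wR := (ER + 1) / (ER - 1)).
assert (Hw1 : 1 < wR). { unfold wR. apply (Rmult_lt_reg_r (ER - 1)); [lra|].
  unfold Rdiv. rewrite Rmult_assoc, Rinv_l by lra. lra. }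
assert (Hw2 : wR <= wt). { unfold wR, wt. apply (Rmult_le_reg_r ((ER-1)*(Et-1))); [nra|].
  replace ((ER + 1) / (ER - 1) * ((ER - 1) * (Et - 1))) with ((ER+1)*(Et-1)) by (field; lra).
  replace ((Et + 1) / (Et - 1) * ((ER - 1) * (Et - 1))) with ((Et+1)*(ER-1)) by (field; lra).
  nra. }
assert (Hw3 : wt <= w0). { unfold w0, wt. apply (Rmult_le_reg_r ((E0-1)*(Et-1))); [nra|].
  replace ((E0 + 1) / (E0 - 1) * ((E0 - 1) * (Et - 1))) with ((E0+1)*(Et-1)) by (field; lra).
  replace ((Et + 1) / (Et - 1) * ((E0 - 1) * (Et - 1))) with ((Et+1)*(E0-1)) by (field; lra).
  nra. }
set (K := ln wR).
assert (HK : 0 <= K). { unfold K. rewrite <- ln_1. apply ln_le; lra. }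
assert (Hm := Hmono K wt w0 HK ltac:(lra)).
unfold wt at 2 3, w0 at 2 3 in Hm. rewrite !wE in Hm by lra.
assert (HtR : forall E, 1 < E -> tanhR (a * Rr / 2) / ((E - 1) / (E + 1)) = ((E+1)/(E-1)) / wR).
{ intros E HE. rewrite tanh_form. fold ER. unfold wR. field. split; lra. }
unfold ratio in Hrat.
rewrite (tanh_form (a * rt)), (tanh_form (a * r0)) in Hrat. fold Et E0 in Hrat.
rewrite (HtR Et), (HtR E0) in Hrat by lra. fold wt w0 in Hrat.
rewrite !ln_div in Hrat by lra. fold K in Hrat.
assert (HA : K <= ln wt) by (unfold K; apply ln_le; lra).
assert (HB : ln wt <= ln w0) by (apply ln_le; lra).
destruct (Rle_lt_or_eq_dec 0 (ln w0 - K) ltac:(lra)) as [HBp|HB0].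
2:{ exfalso. rewrite <- HB0 in Hrat. replace (ln wt - K) with 0 in Hrat by lra.
    rewrite Rdiv_0_l in Hrat. lra. }
assert (HAe : ln wt - K = eps * (ln w0 - K)).
{ rewrite <- Hrat. field. lra. }
rewrite HAe in Hm.
assert (Hf : eps * Et <= E0).
{ apply (Rmult_le_reg_l (ln w0 - K)); [lra|]. nra. }
assert (Hl : ln eps + a * rt <= a * r0).
{ rewrite <- (ln_exp (a * rt)), <- (ln_exp (a * r0)). fold Et E0.
  rewrite <- ln_mult by (unfold Et; auto using exp_pos). apply ln_le.
  apply Rmult_lt_0_compat; [lra| unfold Et; apply exp_pos]. exact Hf. }
rewrite Rmult_1_l. unfold Rpower. apply exp_mono.
apply (Rmult_le_reg_l a); [lra|].
replace (a * (- (1 / a) * ln eps)) with (- ln eps) by (field; lra). lra.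
Qed.
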